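(* Let $\mathcal{I}$, $\mathcal{I'}$ and $\mathcal{I''}$ be group interface automata. If $\mathcal{I}$ and $\mathcal{I'}$ are composable, then $\mathcal{I}\otimes \mathcal{I'} = \mathcal{I'}\otimes \mathcal{I}$. If $\mathcal{I}$, $\mathcal{I'}$ and $\mathcal{I''}$ are pairwise composable, then $(\mathcal{I}\otimes \mathcal{I''})\otimes \mathcal{I'} = \mathcal{I}\otimes (\mathcal{I'}\otimes \mathcal{I''})$.
   Context: Fix a set $\mathcal{P}$ of participants and a set $\mathcal{M}$ of messages. A group interface automaton (GIA) is a tuple $\mathcal{I}=(V, v_0,\mathcal{G},\mathcal{A},\mathcal{T})$ where $V$ is a finite set of states, $v_0\in V$ is the initial state, $\mathcal{G}\subseteq\mathcal{P}$ is a finite set of participants, $\mathcal{A}=\mathcal{A}^I\cup\mathcal{A}^O\cup\mathcal{A}^H$ with $\mathcal{A}^I=(\mathcal{P}\setminus\mathcal{G})\times\mathcal{G}\times\{?\}\times\mathcal{M}$ (inputs, written $AB?m$), $\mathcal{A}^O=\mathcal{G}\times(\mathcal{P}\setminus\mathcal{G})\times\{!\}\times\mathcal{M}$ (outputs, written $AB!m$), $\mathcal{A}^H=\mathcal{G}\times\mathcal{G}\times\{!?\}\times\mathcal{M}$ (internal actions, written $AB!?m$), and $\mathcal{T}\subseteq V\times(\mathcal{A}\cup\{\tau\})\times V$ is a set of transitions, $\tau$ being a special internal action. For GIA $\mathcal{I}$ (actions $\mathcal{A}$) and $\mathcal{I'}$ (actions $\mathcal{A'}$) define the shared inputs $\textit{si}(\mathcal{I},\mathcal{I'})=\{AB?m\in\mathcal{A}\mid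 AB!m\in\mathcal{A'}\}\cup\{AB?m\in\mathcal{A'}\mid AB!m\in\mathcal{A}\}$, shared outputs $\textit{so}(\mathcal{I},\mathcal{I'})=\{AB!m\in\mathcal{A}\mid AB?m\in\mathcal{A'}\}\cup\{AB!m\in\mathcal{A'}\mid AB?m\in\mathcal{A}\}$, and shared internals $\textit{sh}(\mathcal{I},\mathcal{I'})=\{AB!?m\mid AB!m\in\mathcal{A}, AB?m\in\mathcal{A'}\}\cup\{AB!?m\mid AB!m\in\mathcal{A'}, AB?m\in\mathcal{A}\}$. Two GIA $\mathcal{I'}=(V',v_0',\mathcal{G'},\mathcal{A'},\mathcal{T'})$ and $\mathcal{I''}=(V'',v_0'',\mathcal{G''},\mathcal{A''},\mathcal{T''})$ are composable if $\mathcal{G'}\cap\mathcal{G''}=\emptyset$, and then their product is $\mathcal{I'}\otimes\mathcal{I''}=(V'\times V'',(v_0',v_0''),\mathcal{G'}\cup\mathcal{G''},\mathcal{A}^I\cup\mathcal{A}^O\cup\mathcal{A}^H,\mathcal{T})$ with $\mathcal{A}^I=(\mathcal{A'}^I\cup\mathcal{A''}^I)\setminus\textit{si}(\mathcal{I'},\mathcal{I''})$, $\mathcal{A}^O=(\mathcal{A'}^O\cup\mathcal{A''}^O)\setminus\textit{so}(\mathcal{I'},\mathcal{I''})$, $\mathcal{A}^H=\mathcal{A'}^H\cup\mathcal{A''}^H\cup\textit{sh}(\mathcal{I'},\mathcal{I''})$, and $\mathcal{T}$ consisting of: $(v',v'')\xrightarrow{\alpha}(u',v'')$ for $v'\xrightarrow{\alpha}u'\in\mathcal{T'}$,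 $\alpha\notin\textit{si}\cup\textit{so}$, $v''\in V''$; $(v',v'')\xrightarrow{\alpha}(v',u'')$ for $v''\xrightarrow{\alpha}u''\in\mathcal{T''}$, $\alpha\notin\textit{si}\cup\textit{so}$, $v'\in V'$; $(v',v'')\xrightarrow{AB!?m}(u',u'')$ whenever $v'\xrightarrow{AB!m}u'\in\mathcal{T'}$ and $v''\xrightarrow{AB?m}u''\in\mathcal{T''}$; and $(v',v'')\xrightarrow{AB!?m}(u',u'')$ whenever $v''\xrightarrow{AB!m}u''\in\mathcal{T''}$ and $v'\xrightarrow{AB?m}u'\in\mathcal{T'}$ (here $\textit{si},\textit{so}$ are taken for $(\mathcal{I'},\mathcal{I''})$). *)

(* Defs.v *)
From Stdlib Require Import List.

Set Implicit Arguments.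

Section GIA.
Variables (P M : Type).  (* participants and messages *)

(* Actions: AB?m (input), AB!m (output), AB!?m (internal). *)
Inductive action :=
| Inp (a b : P) (m : M)
| Outp (a b : P) (m : M)
| Hid (a b : P) (m : M).

Record gia := GIA {
  st : Type;
  init : st;
  grp : P -> Prop;
  actI : action -> Prop;
  actO : action -> Prop;
  actH : action -> Prop;
  trans : st -> option action -> st -> Prop  (* T; None = tau *)
}.

Definition acts (I : gia) (x : action) : Prop := actI I x \/ actO I x \/ actH I x.

Definition finite_set {X : Type} (A : X -> Prop) : Prop :=
  exists l : list X, forall x, A x -> In x l.

Definition wf_gia (I : gia) : Prop :=
  finite_set (fun _ : st I => True) /\
  finite_set (grp I) /\
  (forall x, actI I x -> exists a b m, x = Inp a b m /\ ~ grp I a /\ grp I b) /\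
  (forall x, actO I x -> exists a b m, x = Outp a b m /\ grp I a /\ ~ grp I b) /\
  (forall x, actH I x -> exists a b m, x = Hid a b m /\ grp I a /\ grp I b) /\
  (forall v x u, trans I v (Some x) u -> acts I x).

Definition composable (I1 I2 : gia) : Prop :=
  forall p, ~ (grp I1 p /\ grp I2 p).

Definition si (I1 I2 : gia) (x : action) : Prop :=
  match x with
  | Inp a b m => (acts I1 x /\ acts I2 (Outp a b m)) \/ (acts I2 x /\ acts I1 (Outp a b m))
  | _ => False
  end.

Definition so (I1 I2 : gia) (x : action) : Prop :=
  match x with
  | Outp a b m => (acts I1 x /\ acts I2 (Inp a b m)) \/ (acts I2 x /\ acts I1 (Inp a b m))
  | _ => False
  end.

Definition sh (I1 I2 : gia) (x : action) : Prop :=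
  match x with
  | Hid a b m => (acts I1 (Outp a b m) /\ acts I2 (Inp a b m))
                 \/ (acts I2 (Outp a b m) /\ acts I1 (Inp a b m))
  | _ => False
  end.

Definition shared_lab (I1 I2 : gia) (l : option action) : Prop :=
  match l with
  | None => False
  | Some x => si I1 I2 x \/ so I1 I2 x
  end.

Definition gprod (I1 I2 : gia) : gia :=
  {| st := (st I1 * st I2)%type;
     init := (init I1, init I2);
     grp := fun p => grp I1 p \/ grp I2 p;
     actI := fun x => (actI I1 x \/ actI I2 x) /\ ~ si I1 I2 x;
     actO := fun x => (actO I1 x \/ actO I2 x) /\ ~ so I1 I2 x;
     actH := fun x => actH I1 x \/ actH I2 x \/ sh I1 I2 x;
     trans := fun v l u =>
       (trans I1 (fst v) l (fst u) /\ snd u = snd v /\ ~ shared_lab I1 I2 l)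
       \/ (trans I2 (snd v) l (snd u) /\ fst u = fst v /\ ~ shared_lab I1 I2 l)
       \/ (exists a b m, l = Some (Hid a b m) /\
             ((trans I1 (fst v) (Some (Outp a b m)) (fst u) /\
               trans I2 (snd v) (Some (Inp a b m)) (snd u))
              \/ (trans I2 (snd v) (Some (Outp a b m)) (snd u) /\
                  trans I1 (fst v) (Some (Inp a b m)) (fst u))))
  |}.

(* Equality of GIA up to renaming of states (the product's state set is a
   cartesian product, so "=" is read as isomorphism via a state bijection). *)
Definition gia_iso (I J : gia) : Prop :=
  exists (f : st I -> st J) (g : st J -> st I),
    (forall v, g (f v) = v) /\ (forall w, f (g w) = w) /\
    f (init I) = init J /\
    (forall p, grp I p <-> grp J p) /\
    (forall x, actI I x <-> actI J x) /\
    (forall x, actO I x <-> actO J x) /\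
    (forall x, actH I x <-> actH J x) /\
    (forall v l u, trans I v l u <-> trans J (f v) l (f u)).

End GIA.

(* Main.v *)
Require Import Defs.
From Stdlib Require Import Setoid Classical PropExtensionality.

Section H.
Variables (P M : Type).
Implicit Types (X Y : gia P M).

Lemma tr_inp (I1 I2 : gia P M) v u a b m :
  trans (gprod I1 I2) v (Some (Inp a b m)) u <->
  (trans I1 (fst v) (Some (Inp a b m)) (fst u) /\ snd u = snd v /\ ~ shared_lab I1 I2 (Some (Inp a b m)))
  \/ (trans I2 (snd v) (Some (Inp a b m)) (snd u) /\ fst u = fst v /\ ~ shared_lab I1 I2 (Some (Inp a b m))).
Proof.
  simpl; split; intros H; [|tauto].
  destruct H as [H|[H|(a0&b0&m0&E&_)]]; [tauto|tauto|discriminate].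
Qed.

Lemma tr_outp (I1 I2 : gia P M) v u a b m :
  trans (gprod I1 I2) v (Some (Outp a b m)) u <->
  (trans I1 (fst v) (Some (Outp a b m)) (fst u) /\ snd u = snd v /\ ~ shared_lab I1 I2 (Some (Outp a b m)))
  \/ (trans I2 (snd v) (Some (Outp a b m)) (snd u) /\ fst u = fst v /\ ~ shared_lab I1 I2 (Some (Outp a b m))).
Proof.
  simpl; split; intros H; [|tauto].
  destruct H as [H|[H|(a0&b0&m0&E&_)]]; [tauto|tauto|discriminate].
Qed.

Lemma tr_none (I1 I2 : gia P M) v u :
  trans (gprod I1 I2) v None u <->
  (trans I1 (fst v) None (fst u) /\ snd u = snd v /\ ~ shared_lab I1 I2 None)
  \/ (trans I2 (snd v) None (snd u) /\ fst u = fst v /\ ~ shared_lab I1 I2 None).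
Proof.
  simpl; split; intros H; [|tauto].
  destruct H as [H|[H|(a0&b0&m0&E&_)]]; [tauto|tauto|discriminate].
Qed.

Lemma tr_hid (I1 I2 : gia P M) v u a b m :
  trans (gprod I1 I2) v (Some (Hid a b m)) u <->
  (trans I1 (fst v) (Some (Hid a b m)) (fst u) /\ snd u = snd v /\ ~ shared_lab I1 I2 (Some (Hid a b m)))
  \/ (trans I2 (snd v) (Some (Hid a b m)) (snd u) /\ fst u = fst v /\ ~ shared_lab I1 I2 (Some (Hid a b m)))
  \/ ((trans I1 (fst v) (Some (Outp a b m)) (fst u) /\
               trans I2 (snd v) (Some (Inp a b m)) (snd u))
              \/ (trans I2 (snd v) (Some (Outp a b m)) (snd u) /\
                  trans I1 (fst v) (Some (Inp a b m)) (fst u))).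
Proof.
  simpl; split; intros H.
  - destruct H as [H|[H|(a0&b0&m0&E&H)]]; [tauto|tauto|].
    injection E; intros; subst; tauto.
  - destruct H as [H|[H|H]]; [tauto|tauto|].
    right; right; exists a, b, m; tauto.
Qed.

Lemma wf_neg X a b m : wf_gia X ->
  ~ actO X (Inp a b m) /\ ~ actH X (Inp a b m) /\
  ~ actI X (Outp a b m) /\ ~ actH X (Outp a b m) /\
  ~ actI X (Hid a b m) /\ ~ actO X (Hid a b m).
Proof.
  intros (_&_&HI&HO&HH&_).
  repeat split; intro H;
  first [ destruct (HI _ H) as (?&?&?&E&_) | destruct (HO _ H) as (?&?&?&E&_)
        | destruct (HH _ H) as (?&?&?&E&_)]; discriminate.
Qed.

Lemma wf_lab X v x u : wf_gia X -> trans X v (Some x) u ->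
  actI X x \/ actO X x \/ actH X x.
Proof. intros (_&_&_&_&_&H) T; exact (H _ _ _ T). Qed.

Lemma wf_in X a b m : wf_gia X -> actI X (Inp a b m) -> grp X b /\ ~ grp X a.
Proof.
  intros (_&_&HI&_) H; destruct (HI _ H) as (a0&b0&m0&E&H1&H2);
  injection E; intros; subst; tauto.
Qed.

Lemma wf_out X a b m : wf_gia X -> actO X (Outp a b m) -> grp X a /\ ~ grp X b.
Proof.
  intros (_&_&_&HO&_) H; destruct (HO _ H) as (a0&b0&m0&E&H1&H2);
  injection E; intros; subst; tauto.
Qed.


Lemma loc3 X Y Z (p : P) : composable X Y -> composable X Z -> composable Y Z ->
  (grp X p /\ ~ grp Y p /\ ~ grp Z p) \/ (~ grp X p /\ grp Y p /\ ~ grp Z p) \/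
  (~ grp X p /\ ~ grp Y p /\ grp Z p) \/ (~ grp X p /\ ~ grp Y p /\ ~ grp Z p).
Proof.
  intros C1 C2 C3; specialize (C1 p); specialize (C2 p); specialize (C3 p).
  destruct (classic (grp X p)); destruct (classic (grp Y p)); destruct (classic (grp Z p)); tauto.
Qed.

Lemma notF (A : Prop) : ~ A -> A = False. Proof. intro; apply propositional_extensionality; tauto. Qed.
Lemma s1 (A : Prop) : (False /\ A) = False. Proof. apply propositional_extensionality; tauto. Qed.
Lemma s2 (A : Prop) : (A /\ False) = False. Proof. apply propositional_extensionality; tauto. Qed.
Lemma s3 (A : Prop) : (False \/ A) = A. Proof. apply propositional_extensionality; tauto. Qed.
Lemma s4 (A : Prop) : (A \/ False) = A. Proof. apply propositional_extensionality; tauto. Qed.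
Lemma s5 : (~ False) = True. Proof. apply propositional_extensionality; tauto. Qed.
Lemma s6 (A : Prop) : (True /\ A) = A. Proof. apply propositional_extensionality; tauto. Qed.
Lemma s7 (A : Prop) : (A /\ True) = A. Proof. apply propositional_extensionality; tauto. Qed.
Lemma s8 (A : Prop) : (False -> A) = True. Proof. apply propositional_extensionality; tauto. Qed.
Lemma s9 (A : Prop) : (True -> A) = A. Proof. apply propositional_extensionality; tauto. Qed.
Lemma s10 (A : Prop) : (A -> True) = True. Proof. apply propositional_extensionality; tauto. Qed.
Lemma s11 (A : Prop) : (True \/ A) = True. Proof. apply propositional_extensionality; tauto. Qed.
Lemma s12 (A : Prop) : (A \/ True) = True. Proof. apply propositional_extensionality; tauto. Qed.
Lemma s13 : (~ True) = False. Proof. apply propositional_extensionality; tauto. Qed.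

End H.

Ltac labf W X v u a b m :=
  pose proof (@wf_lab _ _ X v (Inp a b m) u W);
  pose proof (@wf_lab _ _ X v (Outp a b m) u W);
  pose proof (@wf_lab _ _ X v (Hid a b m) u W).
Ltac labg W X v u a b m :=
  generalize (@wf_lab _ _ X v (Inp a b m) u W);
  generalize (@wf_lab _ _ X v (Outp a b m) u W);
  generalize (@wf_lab _ _ X v (Hid a b m) u W).

Ltac basef a b m :=
  repeat match goal with
  | W : wf_gia ?X |- _ =>
      pose proof (@wf_neg _ _ X a b m W); pose proof (@wf_in _ _ X a b m W);
      pose proof (@wf_out _ _ X a b m W); revert W
  end; intros;
  repeat match goal with
  | C : composable ?X ?Y |- _ => pose proof (C a); pose proof (C b); revert C
  end; intros.

Ltac decide3 X Y Z a b m :=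
  destruct (classic (actI X (Inp a b m))); destruct (classic (actI Y (Inp a b m)));
  destruct (classic (actI Z (Inp a b m))); destruct (classic (actO X (Outp a b m)));
  destruct (classic (actO Y (Outp a b m))); destruct (classic (actO Z (Outp a b m))).

Ltac simp1 := cbn [shared_lab si so sh acts gprod actI actO actH grp fst snd st init] in *.
Ltac simp := simp1; unfold acts in *; simp1; unfold acts in *; simp1; unfold acts in *; simp1;
  repeat rewrite pair_equal_spec.


Ltac splitnegs := repeat match goal with
  | H : ~ _ /\ _ |- _ => destruct H
  | H : _ /\ _ |- _ => destruct H
  | H : _ \/ _ |- _ => destruct H
  end.

Ltac derive := repeat match goal with
  | H : ?A -> ?B /\ ?C, Hn : ~ ?B |- _ => assert (~ A) by exact (fun x => Hn (proj1 (H x))); clear H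
  | H : ?A -> ?B /\ ~ ?C, Hc : ?C |- _ => assert (~ A) by exact (fun x => proj2 (H x) Hc); clear H
  end.

Ltac kill := repeat match goal with
  | Hn : ~ ?A |- context [?A] => rewrite (notF _ Hn)
  end; repeat rewrite ?s1, ?s2, ?s3, ?s4, ?s5, ?s6, ?s7, ?s8, ?s9, ?s10, ?s11, ?s12, ?s13.

Ltac locs a b :=
  match goal with
  | C12 : composable ?X ?Y, C13 : composable ?X ?Z, C23 : composable ?Y ?Z |- _ =>
     destruct (@loc3 _ _ _ _ _ a C12 C13 C23) as [?|[?|[?|?]]];
     destruct (@loc3 _ _ _ _ _ b C12 C13 C23) as [?|[?|[?|?]]]
  end.

Theorem mainTheorem1 (P M : Type) (I I' I'' : gia P M) :
  wf_gia I -> wf_gia I' -> wf_gia I'' ->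
  (composable I I' -> gia_iso (gprod I I') (gprod I' I)) /\
  (composable I I' -> composable I I'' -> composable I' I'' ->
     gia_iso (gprod (gprod I I'') I') (gprod I (gprod I' I''))).
Proof.
  intros W1 W2 W3; split.
  - intros C12.
    exists (fun s => (snd s, fst s)), (fun s => (snd s, fst s)).
    split; [intros [? ?]; reflexivity|].
    split; [intros [? ?]; reflexivity|].
    split; [reflexivity|].
    split; [intros p; simpl; tauto|].
    split; [intros [a b m|a b m|a b m]; basef a b m; simp; tauto|].
    split; [intros [a b m|a b m|a b m]; basef a b m; simp; tauto|].
    split; [intros [a b m|a b m|a b m]; basef a b m; simp; tauto|].
    intros [v1 v2] [[a b m|a b m|a b m]|] [u1 u2].
    + rewrite !tr_inp. basef a b m. labf W1 I v1 u1 a b m. labf W2 I' v2 u2 a b m.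
      simp. tauto.
    + rewrite !tr_outp. basef a b m. labf W1 I v1 u1 a b m. labf W2 I' v2 u2 a b m.
      simp. tauto.
    + rewrite !tr_hid, ?tr_inp, ?tr_outp. basef a b m. labf W1 I v1 u1 a b m. labf W2 I' v2 u2 a b m.
      simp. tauto.
    + rewrite !tr_none. simp. tauto.
  - intros C12 C13 C23.
    exists (fun s => (fst (fst s), (snd s, snd (fst s)))),
           (fun w => ((fst w, snd (snd w)), fst (snd w))).
    split; [intros [[? ?] ?]; reflexivity|].
    split; [intros [? [? ?]]; reflexivity|].
    split; [reflexivity|].
    split; [intros p; simpl; tauto|].
    split; [intros [a b m|a b m|a b m]; basef a b m; locs a b; splitnegs; derive; simp; kill; tauto|].
    split; [intros [a b m|a b m|a b m]; basef a b m; locs a b; splitnegs; derive; simp; kill; tauto|].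
    split; [intros [a b m|a b m|a b m]; basef a b m; locs a b; splitnegs; derive; simp; kill; tauto|].
    intros [[v1 v3] v2] [[a b m|a b m|a b m]|] [[u1 u3] u2].
    + rewrite !tr_inp. basef a b m. labg W1 I v1 u1 a b m. labg W2 I' v2 u2 a b m.
      labg W3 I'' v3 u3 a b m. locs a b; splitnegs; derive; simp; kill; intros; tauto.
    + rewrite !tr_outp. basef a b m. labg W1 I v1 u1 a b m. labg W2 I' v2 u2 a b m.
      labg W3 I'' v3 u3 a b m. locs a b; splitnegs; derive; simp; kill; intros; tauto.
    + rewrite !tr_hid, ?tr_inp, ?tr_outp. basef a b m. labg W1 I v1 u1 a b m. labg W2 I' v2 u2 a b m.
      labg W3 I'' v3 u3 a b m. locs a b; splitnegs; derive; simp; kill; intros; tauto.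
    + rewrite !tr_none. simp. tauto.
Qed.
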